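(* Assume (H1). Let $h\ge0$ be an integer, $\mathbf{a}\in\mathbb{N}^I[h]$ and $m\in\{0,\dots,n\}$. Then $$\mathbb{P}_n(A_{u(m)}=\mathbf{a})=\mathbb{Q}_h(\mathbf{a})\,\frac{\mathbb{P}\big(|\mathbf{f}_{N_1(\mathbf{a})}|=m-h,\ |\mathbf{f}'_{1+N_2(\mathbf{a})}|=n+1-m\big)}{\mathbb{P}(|\mathbf{T}|=n+1)},$$ where $\mathbf{f}$ and $\mathbf{f}'$ are independent random forests.
   Context: Planar trees: finite subsets $T$ of the set of finite words over $\{1,2,\dots\}$ containing the empty word $\emptyset$, with $ui\in T\Rightarrow u\in T$ and $uj\in T$ for $1\le j\le i$. $c_u(T)$ = number of children, $|u|$ = word length; vertices ordered lexicographically (prefixes first), $u(k)$ the $k$-th vertex, $u(0)=\emptyset$. $|T|$ is the number of vertices. (H1): $\mu=(\mu_k)_{k\ge0}$ probability on $\mathbb{N}$ with $\mu_0+\mu_1\ne1$, $\sum_kk\mu_k=1$, $\sum_{k\le K}\mu_k=1$ for some integer $K>0$. $\mathbf{T}$ is a Galton–Watson tree with offspring law $\mu$ and $\mathbb{P}_n=\mathbb{P}(\cdot\mid|\mathbf{T}|=n+1)$ (for $n$ with positive conditioning probability). For $k\ge0$, $\mathbf{f}_k=(\mathbf{T}^1,\dots,\mathbf{T}^k)$ is a forest of $k$ i.i.d. such GW trees, with size $|\mathbf{f}_k|=\sum_i|\mathbf{T}^i|$. $I_K=\{(k,j):1\le j\le k\le K\}$; $\mathbb{N}^I[h]$ is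 the set of $c\in\mathbb{N}^{I_K}$ with $\sum_{i\in I_K}c_i=h$; $\mathbb{Q}_h(\mathbf{a})=\binom{h}{(\mathbf{a}_i)_{i\in I_K}}\prod_{(k,j)\in I_K}\mu_k^{\mathbf{a}_{k,j}}$ for $\mathbf{a}\in\mathbb{N}^I[h]$ (the multinomial law with parameters $h$ and $p_{k,j}=\mu_k$). For $\mathbf{a}\in\mathbb{R}^{I_K}$, $N_1(\mathbf{a})=\sum_{(k,j)}(j-1)\mathbf{a}_{k,j}$ and $N_2(\mathbf{a})=\sum_{(k,j)}(k-j)\mathbf{a}_{k,j}$. Lineage: $A_u=(A_{u,k,j})_{(k,j)\in I_K}$, where $A_{u,k,j}$ is the number of strict ancestors $v$ of $u$ with $c_v=k$ such that $u$ is a descendant of (or equal to) $vj$. *)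

(* Defs.v *)
From HB Require Import structures.
From mathcomp Require Import all_boot all_order all_algebra finmap.
From mathcomp Require Import boolp classical_sets fsbigop reals.
Set Implicit Arguments. Unset Strict Implicit. Unset Printing Implicit Defensive.
Import Order.TTheory GRing.Theory Num.Theory.
Local Open Scope classical_set_scope.
Local Open Scope ring_scope.
Local Open Scope fset_scope.

(* Words over {1,2,...} are [seq nat]; the word "u i" is [rcons u i]. *)
Definition word := seq nat.
Definition ptree := {fset word}.

Definition is_tree (T : ptree) : Prop :=
  [::] \in T /\
  (forall u, u \in T -> all (fun i => 0 < i)%N u) /\
  (forall u i, rcons u i \in T -> u \in T /\ forall j, (1 <= j <= i)%N -> rcons u j \in T).

Definition nchildren (T : ptree) (u : word) : nat :=
  #|` [fset v in T | (size v == (size u).+1) && (take (size u) v == u)] |.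

Definition tree_size (T : ptree) : nat := #|` T|.

Fixpoint lexle (u v : word) : bool :=
  match u, v with
  | [::], _ => true
  | _ :: _, [::] => false
  | x :: u', y :: v' => (x < y)%N || ((x == y) && lexle u' v')
  end.

(* u(k): the k-th vertex of T in lexicographic order (u(0) = empty word) *)
Definition vertex (T : ptree) (k : nat) : word :=
  nth [::] (sort lexle (enum_fset T)) k.

(* A_{u,k,j}: number of strict ancestors v = take l u (l < |u|) of u with
   c_v(T) = k and such that u is a descendant of (or equal to) v j. *)
Definition lineage (T : ptree) (u : word) (k j : nat) : nat :=
  count (fun l => (nchildren T (take l u) == k) &&
                  (take l.+1 u == rcons (take l u) j)) (iota 0 (size u)).

Section GW.
Variable R : realType.
Variable mu : nat -> R.

Definition GWprob (t : ptree) : R := \prod_(u <- enum_fset t) mu (nchildren t u).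

(* P(T in E), E an event on finite trees (used only for events with finitely
   many trees, e.g. those fixing |T|) *)
Definition PrT (E : ptree -> Prop) : R :=
  \sum_(t \in [set t | is_tree t /\ E t]) GWprob t.

Definition fsize (f : seq ptree) : nat := \sum_(t <- f) tree_size t.
Definition is_forest (k : nat) (f : seq ptree) : Prop :=
  size f = k /\ forall t, t \in f -> is_tree t.
Definition forest_weight (f : seq ptree) : R := \prod_(t <- f) GWprob t.

(* P(|f_k| = x, |f'_k'| = y) for independent forests f_k, f'_k' of
   k (resp. k') i.i.d. GW trees; sizes compared in int. *)
Definition PrFF (k k' : nat) (x y : int) : R :=
  \sum_(p \in [set p : seq ptree * seq ptree |
                 [/\ is_forest k p.1, is_forest k' p.2,
                     (fsize p.1)%:Z = x & (fsize p.2)%:Z = y]])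
     (forest_weight p.1 * forest_weight p.2).
End GW.

Definition sumI (K : nat) (F : nat -> nat -> nat) : nat :=
  (\sum_(1 <= k < K.+1) \sum_(1 <= j < k.+1) F k j)%N.
Definition N1 (K : nat) (a : nat -> nat -> nat) : nat := sumI K (fun k j => (j - 1) * a k j)%N.
Definition N2 (K : nat) (a : nat -> nat -> nat) : nat := sumI K (fun k j => (k - j) * a k j)%N.

(* Q_h(a): multinomial law with parameters h and p_{k,j} = mu_k *)
Definition Qh (R : realType) (mu : nat -> R) (K h : nat) (a : nat -> nat -> nat) : R :=
  (h`!)%:R / (\prod_(1 <= k < K.+1) \prod_(1 <= j < k.+1) ((a k j)`!)%:R)
  * \prod_(1 <= k < K.+1) \prod_(1 <= j < k.+1) mu k ^+ a k j.

(* Main.v *)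
Require Import Defs.
From HB Require Import structures.
From mathcomp Require Import all_boot all_order all_algebra finmap.
From mathcomp Require Import boolp classical_sets fsbigop reals cardinality.
From mathcomp Require Import zify ring.
Import Order.TTheory GRing.Theory Num.Theory.
Set Implicit Arguments. Unset Strict Implicit. Unset Printing Implicit Defensive.
Local Open Scope ring_scope.
Local Open Scope classical_set_scope.
Lemma lexle_trans : transitive lexle.
Proof.
elim=> [|x u IH] [|y v] [|z w] //=.
move=> /orP[lt1|/andP[/eqP e1 l1]] /orP[lt2|/andP[/eqP e2 l2]]; apply/orP.
- by left; apply: ltn_trans lt1 lt2.
- by left; rewrite -e2.
- by left; rewrite e1.
- by right; rewrite e1 e2 eqxx (IH _ _ l1 l2).
Qed.

Lemma lexle_anti : antisymmetric lexle.
Proof.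
elim=> [|x u IH] [|y v] //= /andP[/orP[lt1|/andP[/eqP e1 l1]] /orP[lt2|/andP[/eqP e2 l2]]].
- by move: (ltn_trans lt1 lt2); rewrite ltnn.
- by move: lt1; rewrite e2 ltnn.
- by move: lt2; rewrite e1 ltnn.
- by rewrite e1 (IH v) // l1 l2.
Qed.

Lemma lexle_total : total lexle.
Proof.
elim=> [|x u IH] [|y v] //=.
case: (ltngtP x y) => [lt|gt|e]; first by [].
  by rewrite orbT.
by rewrite /= IH.
Qed.

Lemma lexle_cons x u v : lexle (x :: u) (x :: v) = lexle u v.
Proof. by rewrite /= ltnn eqxx. Qed.

Definition all_trees (f : seq ptree) := forall t, t \in f -> is_tree t.

Lemma tree_nil t : is_tree t -> [::] \in t.
Proof. by case. Qed.

Lemma tree_pos t u : is_tree t -> u \in t -> all (fun i => 0 < i)%N u.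
Proof. by case=> _ [H _]; apply: H. Qed.

Lemma tree_rcons t u i : is_tree t -> rcons u i \in t -> u \in t.
Proof. by case=> _ [_ H] /H []. Qed.

Lemma tree_sib t u i j : is_tree t -> rcons u i \in t -> (1 <= j <= i)%N -> rcons u j \in t.
Proof. by case=> _ [_ H] /H [_]; apply. Qed.

Lemma tree_prefix t u v : is_tree t -> u ++ v \in t -> u \in t.
Proof.
move=> Ht; elim/last_ind: v => [|v x IH]; first by rewrite cats0.
by rewrite -rcons_cat => /(tree_rcons Ht).
Qed.

Lemma tree_take t u l : is_tree t -> u \in t -> take l u \in t.
Proof. by move=> Ht Hu; apply: (tree_prefix (v := drop l u)) => //; rewrite cat_take_drop. Qed.

Definition chset (t : ptree) (u : word) : {fset word} :=
  [fset v in t | (size v == (size u).+1) && (take (size u) v == u)]%fset.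

Lemma nchildrenE t u : nchildren t u = #|` chset t u|.
Proof. by []. Qed.

Lemma chsetP t u v : (v \in chset t u) = (v \in t) && (v == rcons u (last 0%N v)).
Proof.
rewrite /chset !inE; congr (_ && _).
apply/idP/eqP.
  case/andP=> /eqP sv /eqP tv; case/lastP: v sv tv => [|v x] //=.
  rewrite size_rcons => -[sv]; rewrite -cats1 take_size_cat // => ->.
  by rewrite last_cat cats1.
by move=> ->; rewrite size_rcons eqxx -cats1 take_size_cat // eqxx.
Qed.

Lemma mem_rcons_chset t u x : (rcons u x \in chset t u) = (rcons u x \in t).
Proof. by rewrite chsetP last_rcons eqxx andbT. Qed.

Lemma ch_mem t u i : is_tree t -> (rcons u i \in t) = (0 < i <= nchildren t u)%N.
Proof.
move=> Ht; rewrite nchildrenE; apply/idP/idP.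
  move=> Hi.
  have ip : (0 < i)%N.
    by have := tree_pos Ht Hi; rewrite all_rcons => /andP[].
  rewrite ip /=.
  have -> : i = #|` [fset x in map (rcons u) (iota 1 i)]%fset|.
    by rewrite card_fseq undup_id ?size_map ?size_iota //
      (map_inj_uniq (@rcons_injr _ u)) iota_uniq.
  apply: fsubset_leq_card; apply/fsubsetP => v; rewrite in_fset /=.
  case/mapP=> j; rewrite mem_iota => Hj ->.
  rewrite mem_rcons_chset; apply: (tree_sib Ht Hi).
  by move: Hj; rewrite add1n ltnS.
case/andP=> ip Hi; apply/negPn/negP => Hn.
have : (#|` chset t u| <= i.-1)%N.
  have -> : i.-1 = #|` [fset x in map (rcons u) (iota 1 i.-1)]%fset|.
    by rewrite card_fseq undup_id ?size_map ?size_iota //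
      (map_inj_uniq (@rcons_injr _ u)) iota_uniq.
  apply: fsubset_leq_card; apply/fsubsetP => v; rewrite chsetP => /andP[vt /eqP ev].
  move: (last 0%N v) ev => x ev; rewrite ev in vt *.
  rewrite in_fset /= mem_map; last exact: rcons_injr.
  rewrite mem_iota.
  have xp : (0 < x)%N.
    by have := tree_pos Ht vt; rewrite all_rcons => /andP[].
  rewrite xp /= add1n prednK //.
  rewrite ltnNge; apply/negP => le; move/negP: Hn; apply; apply: (tree_sib Ht vt).
  by rewrite ip.
by rewrite -ltnS prednK // ltnNge Hi.
Qed.

Lemma nchildren_eq t1 t2 u1 u2 : is_tree t1 -> is_tree t2 ->
  (forall i, (rcons u1 i \in t1) = (rcons u2 i \in t2)) ->
  nchildren t1 u1 = nchildren t2 u2.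
Proof.
move=> H1 H2 E; case: (ltngtP (nchildren t1 u1) (nchildren t2 u2)) => // lt.
  have := E (nchildren t2 u2); rewrite !ch_mem // leqnn (leq_ltn_trans _ lt) //.
  by rewrite andbT leqNgt lt andbF.
have := E (nchildren t1 u1); rewrite !ch_mem // leqnn (leq_ltn_trans _ lt) //.
by rewrite andbT leqNgt lt andbF.
Qed.

Lemma nchildren_le t u : (nchildren t u <= tree_size t)%N.
Proof.
rewrite nchildrenE; apply: fsubset_leq_card; apply/fsubsetP => v.
by rewrite chsetP => /andP[].
Qed.

Lemma tree_size_gt0 t : is_tree t -> (0 < tree_size t)%N.
Proof.
move=> Ht; rewrite /tree_size cardfs_gt0; apply/eqP => e.
by have := tree_nil Ht; rewrite e inE.
Qed.

Lemma tree_word_size t u : is_tree t -> u \in t -> (size u < tree_size t)%N.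
Proof.
move=> Ht Hu.
have -> : (size u).+1 = #|` [fset x in map (fun l => take l u) (iota 0 (size u).+1)]%fset|.
  rewrite card_fseq undup_id ?size_map ?size_iota //.
  rewrite map_inj_in_uniq ?iota_uniq // => l l'; rewrite !mem_iota /= !add0n !ltnS.
  by move=> le1 le2 e; rewrite -(size_takel le1) -(size_takel le2) e.
apply: fsubset_leq_card; apply/fsubsetP => v; rewrite in_fset.
by move/mapP => [l _ ->]; apply: tree_take.
Qed.

Lemma tree_letter t u : is_tree t -> u \in t -> all (fun x => x <= tree_size t)%N u.
Proof.
move=> Ht Hu; apply/allP => x xu; move: Hu; case/splitPr: xu => u1 u2.
rewrite -cat_rcons => /(tree_prefix Ht) H.
have : (0 < x <= nchildren t u1)%N by rewrite -ch_mem.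
by case/andP=> _ /leq_trans; apply; apply: nchildren_le.
Qed.

Fixpoint wb (s l : nat) : seq word :=
  if l is l'.+1 then [::] :: [seq x :: w | x <- iota 0 s.+1, w <- wb s l'] else [:: [::]].

Lemma mem_wb s l u : (u \in wb s l) = (size u <= l)%N && all (fun x => x <= s)%N u.
Proof.
elim: l u => [|l IH] u.
  by rewrite inE; case: u.
case: u => [|x u]; first by rewrite in_cons eqxx.
change (wb s l.+1) with ([::] :: [seq y :: w | y <- iota 0 s.+1, w <- wb s l]).
rewrite in_cons.
have -> : (x :: u == [::]) = false by [].
rewrite orFb.
apply/allpairsPdep/idP.
  case=> y [w [yi wi [-> ->]]]; move: yi wi; rewrite mem_iota IH add0n ltnS /=.
  by move=> ys /andP[sw aw]; rewrite ltnS sw ys aw.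
case/andP=> su /andP[xs us]; exists x, u; split => //.
  by rewrite mem_iota add0n ltnS xs.
by rewrite IH; apply/andP; split.
Qed.

Lemma finite_trees s : finite_set [set t : ptree | is_tree t /\ (tree_size t <= s)%N].
Proof.
apply: (@sub_finite_set _ _ [set` fpowerset [fset x in wb s s]%fset]); last exact: finite_fset.
move=> t [Ht ts] /=; rewrite fpowersetE; apply/fsubsetP => u ut.
rewrite in_fset /= mem_wb.
rewrite (leq_trans _ ts) ?(ltnW (tree_word_size Ht ut)) //=.
by apply/allP => x /(allP (tree_letter Ht ut)) /leq_trans; apply.
Qed.

Lemma finite_seqs (T : eqType) (X : set T) n : finite_set X ->
  finite_set [set f : seq T | (size f <= n)%N /\ forall x, x \in f -> X x].
Proof.
move=> FX; elim: n => [|n IH].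
  apply: (@sub_finite_set _ _ [set [::]]); last exact: finite_set1.
  by move=> [|x f] //= [].
apply: (@sub_finite_set _ _ ([set [::]] `|` [set p.1 :: p.2 | p in X `*` [set f : seq T | (size f <= n)%N /\ forall x, x \in f -> X x]])).
  move=> [|x f] /= [sf Hf]; [by left | right].
  exists (x, f) => //; split => /=; first by apply: Hf; rewrite inE eqxx.
  by split => // y yf; apply: Hf; rewrite inE yf orbT.
by rewrite finite_setU; split; [exact: finite_set1 | apply: finite_image; apply: finite_setX].
Qed.

Lemma fsize_cons t f : fsize (t :: f) = (tree_size t + fsize f)%N.
Proof. by rewrite /fsize big_cons. Qed.

Lemma fsize_nil : fsize [::] = 0%N.
Proof. by rewrite /fsize big_nil. Qed.

Lemma fsize_cat f g : fsize (f ++ g) = (fsize f + fsize g)%N.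
Proof. by rewrite /fsize big_cat. Qed.

Lemma size_le_fsize f : all_trees f -> (size f <= fsize f)%N.
Proof.
elim: f => [|t f IH] Hf; first by rewrite fsize_nil.
rewrite fsize_cons /= -add1n leq_add ?tree_size_gt0 ?IH //.
  by apply: Hf; rewrite inE eqxx.
by move=> u uf; apply: Hf; rewrite inE uf orbT.
Qed.

Lemma tree_le_fsize f t : t \in f -> (tree_size t <= fsize f)%N.
Proof.
elim: f => [|t' f IH] //; rewrite inE fsize_cons => /orP[/eqP ->|/IH]; first exact: leq_addr.
by move/leq_trans; apply; apply: leq_addl.
Qed.

Lemma finite_forests s : finite_set [set f : seq ptree | all_trees f /\ (fsize f <= s)%N].
Proof.
apply: sub_finite_set (finite_seqs s (finite_trees s)).
move=> f [Hf fs]; split; first exact: leq_trans (size_le_fsize Hf) fs.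
move=> t tf; split; first exact: Hf.
exact: leq_trans (tree_le_fsize tf) fs.
Qed.

Lemma nchildren_char t u c : is_tree t ->
  (forall i, (rcons u i \in t) = (0 < i <= c)%N) -> nchildren t u = c.
Proof.
move=> Ht E; case: (ltngtP (nchildren t u) c) => // lt.
  have := E c; rewrite ch_mem // leqnn (leq_ltn_trans _ lt) //.
  by rewrite andbT leqNgt lt andbF.
have := E (nchildren t u); rewrite ch_mem // leqnn (leq_ltn_trans _ lt) //.
by rewrite andbT leqNgt lt andbF.
Qed.

Definition jseq (f : seq ptree) : seq word :=
  [::] :: [seq i.+1 :: v | i <- iota 0 (size f), v <- enum_fset (nth fset0 f i)].

Definition join (f : seq ptree) : ptree := [fset x in jseq f]%fset.

Lemma mem_jseq_cons f x v :
  (x :: v \in jseq f) = [&& (0 < x)%N, (x.-1 < size f)%N & (v \in nth fset0 f x.-1)].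
Proof.
rewrite /jseq in_cons.
have -> : (x :: v == [::]) = false by [].
rewrite orFb; apply/allpairsPdep/idP.
  case=> i [w [ii wi [-> ->]]] /=; move: ii; rewrite mem_iota add0n => /andP[_ hi].
  by rewrite hi wi.
case/and3P=> xp xs vi; exists x.-1, v; split.
- by rewrite mem_iota add0n xs.
- exact: vi.
- by rewrite prednK.
Qed.

Lemma mem_join_nil f : [::] \in join f.
Proof. by rewrite in_fset in_cons eqxx. Qed.

Lemma mem_join_cons f x v :
  (x :: v \in join f) = [&& (0 < x)%N, (x.-1 < size f)%N & (v \in nth fset0 f x.-1)].
Proof. by rewrite in_fset mem_jseq_cons. Qed.

Lemma uniq_jseq f : uniq (jseq f).
Proof.
rewrite /jseq cons_uniq; apply/andP; split.
  by apply/negP => /allpairsPdep [i [w [_ _]]].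
apply: allpairs_uniq_dep; first exact: iota_uniq.
  by move=> i _; exact: fset_uniq.
by move=> [i1 w1] [i2 w2] _ _ /= [e1 e2]; subst.
Qed.

Lemma perm_join f : perm_eq (enum_fset (join f)) (jseq f).
Proof.
apply: uniq_perm; [exact: fset_uniq | exact: uniq_jseq |].
by move=> w; rewrite -[w \in enum_fset _]/(w \in join f) in_fset.
Qed.

Lemma nth_tree f i : all_trees f -> (i < size f)%N -> is_tree (nth fset0 f i).
Proof. by move=> Hf ifs; apply: Hf; rewrite mem_nth. Qed.

Lemma join_tree f : all_trees f -> is_tree (join f).
Proof.
move=> Hf; split; first exact: mem_join_nil.
split.
  case=> [|x v] //; rewrite mem_join_cons => /and3P[xp xs vi] /=.
  by rewrite xp /=; apply: (tree_pos (nth_tree Hf xs)).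
move=> [|x v] i.
  rewrite /= mem_join_cons => /and3P[ip hi _]; split; first exact: mem_join_nil.
  move=> j /andP[j1 ji]; rewrite mem_join_cons j1 /=.
  have jl : (j.-1 < size f)%N.
    by apply: leq_ltn_trans hi; rewrite -!subn1 leq_sub2r.
  by rewrite jl tree_nil //; apply: nth_tree.
rewrite rcons_cons mem_join_cons => /and3P[xp xs vi].
have Ht := nth_tree Hf xs.
split; first by rewrite mem_join_cons xp xs (tree_rcons Ht vi).
move=> j ji; rewrite rcons_cons mem_join_cons xp xs.
exact: (tree_sib Ht vi ji).
Qed.

Lemma nch_join_nil f : all_trees f -> nchildren (join f) [::] = size f.
Proof.
move=> Hf; apply: nchildren_char; first exact: join_tree.
move=> i; rewrite /= mem_join_cons; case: i => [|i] //=.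
case hi: (i < size f)%N => //=.
by rewrite tree_nil //; apply: nth_tree.
Qed.

Lemma nch_join_cons f x u : all_trees f -> (0 < x)%N -> (x.-1 < size f)%N ->
  nchildren (join f) (x :: u) = nchildren (nth fset0 f x.-1) u.
Proof.
move=> Hf xp xs; apply: nchildren_eq; [exact: join_tree | exact: nth_tree|].
by move=> i; rewrite rcons_cons mem_join_cons xp xs.
Qed.

Definition child (t : ptree) (i : nat) : ptree :=
  [fset behead w | w in t & head 0%N w == i]%fset.

Lemma mem_child t i v : (0 < i)%N -> (v \in child t i) = (i :: v \in t).
Proof.
move=> ip; apply/imfsetP/idP => /=.
  case=> w; rewrite !inE => /andP[wt /eqP hw] ->.
  by case: w wt hw => [|y w] /= wt hw; [move: ip; rewrite -hw | rewrite -hw].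
by move=> H; exists (i :: v) => //; rewrite !inE H eqxx.
Qed.

Definition children (t : ptree) : seq ptree :=
  [seq child t i.+1 | i <- iota 0 (nchildren t [::])].

Lemma size_children t : size (children t) = nchildren t [::].
Proof. by rewrite size_map size_iota. Qed.

Lemma nth_children t i : (i < nchildren t [::])%N -> nth fset0 (children t) i = child t i.+1.
Proof. by move=> H; rewrite (nth_map 0%N) ?size_iota // nth_iota. Qed.

Lemma children_join f : all_trees f -> children (join f) = f.
Proof.
move=> Hf; apply: (@eq_from_nth _ fset0); first by rewrite size_children nch_join_nil.
move=> i; rewrite size_children nch_join_nil // => hi.
rewrite nth_children ?nch_join_nil //.
by apply/fsetP => v; rewrite mem_child // mem_join_cons /= hi.
Qed.

Lemma children_trees t : is_tree t -> all_trees (children t).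
Proof.
move=> Ht s /(nthP fset0) [i]; rewrite size_children => hi <-.
rewrite nth_children //.
split; first by rewrite mem_child // -[[:: i.+1]]/(rcons [::] i.+1) ch_mem.
split.
  by move=> u; rewrite mem_child // => /(tree_pos Ht).
move=> u j; rewrite !mem_child // -rcons_cons => H.
split; first exact: (tree_rcons Ht H).
by move=> k kj; rewrite mem_child // -rcons_cons; exact: (tree_sib Ht H kj).
Qed.

Lemma join_children t : is_tree t -> join (children t) = t.
Proof.
move=> Ht; apply/fsetP => [[|x v]]; first by rewrite mem_join_nil tree_nil.
rewrite mem_join_cons size_children.
apply/idP/idP.
  case/and3P=> xp xs; rewrite nth_children // prednK // mem_child //.
move=> H; have xp : (0 < x)%N by have := tree_pos Ht H; case/andP.
have xs : (x.-1 < nchildren t [::])%N.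
  rewrite prednK //; have : rcons [::] x \in t.
    by have := tree_take 1 Ht H; rewrite /= take0.
  by rewrite ch_mem // => /andP[].
by rewrite xp xs nth_children // prednK // mem_child.
Qed.

Lemma GW_join (R : realType) (mu : nat -> R) f : all_trees f ->
  GWprob mu (join f) = mu (size f) * forest_weight mu f.
Proof.
move=> Hf; rewrite /GWprob (perm_big _ (perm_join f)) /jseq big_cons nch_join_nil //.
congr (_ * _); rewrite big_allpairs_dep /forest_weight (big_nth fset0) /index_iota subn0.
apply: eq_big_seq => i; rewrite mem_iota add0n => /andP[_ hi].
by apply: eq_bigr => v _; rewrite nch_join_cons.
Qed.

Lemma lineage_join f x u k j : all_trees f -> (0 < x)%N -> (x.-1 < size f)%N ->
  lineage (join f) (x :: u) k j =
  (lineage (nth fset0 f x.-1) u k j + ((size f == k) && (x == j)))%N.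
Proof.
move=> Hf xp xs; rewrite /lineage /= -[1%N]addn0 iotaDl count_map addnC.
congr (_ + _)%N.
  apply: eq_count => l /=; rewrite /preim add1n /= nch_join_cons //.
  by rewrite -rcons_cons eqseq_cons eqxx.
by rewrite take0 nch_join_nil //= eqseq_cons andbT.
Qed.

Definition sortw (t : ptree) : seq word := sort lexle (enum_fset t).

Lemma vertexE t k : vertex t k = nth [::] (sortw t) k.
Proof. by []. Qed.

Lemma size_sortw t : size (sortw t) = tree_size t.
Proof. by rewrite size_sort. Qed.

Definition fblocks (f : seq ptree) : seq word :=
  flatten [seq [seq i.+1 :: v | v <- sortw (nth fset0 f i)] | i <- iota 0 (size f)].

Lemma pairwise_blocks f m n :
  pairwise lexle (flatten [seq [seq i.+1 :: v | v <- sortw (nth fset0 f i)] | i <- iota m n]).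
Proof.
elim: n m => [|n IH] m //=.
rewrite pairwise_cat IH andbT; apply/andP; split.
  apply/allrelP => x y /mapP [v _ ->] /flatten_mapP [i].
  rewrite mem_iota => /andP[mi _] /mapP [w _ ->] /=.
  by rewrite ltnS mi.
rewrite pairwise_map; rewrite -sorted_pairwise; last first.
  move=> a b c; change (lexle (m.+1 :: b) (m.+1 :: a) -> lexle (m.+1 :: a) (m.+1 :: c) -> lexle (m.+1 :: b) (m.+1 :: c)).
  rewrite !lexle_cons; exact: lexle_trans.
have := sort_sorted lexle_total (enum_fset (nth fset0 f m)).
apply: sub_sorted => a b; change (lexle a b -> lexle (m.+1 :: a) (m.+1 :: b)).
by rewrite lexle_cons.
Qed.

Lemma sort_join f : sortw (join f) = [::] :: fblocks f.
Proof.
apply: (sorted_eq lexle_trans lexle_anti).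
- by rewrite /sortw; apply: sort_sorted; exact: lexle_total.
- rewrite sorted_pairwise; last exact: lexle_trans.
  rewrite /= pairwise_blocks andbT; by apply/allP.
rewrite /sortw perm_sort (permPl (perm_join f)).
apply: uniq_perm; first exact: uniq_jseq.
  rewrite cons_uniq; apply/andP; split.
    by apply/negP => /flatten_mapP [i _ /mapP [v]].
  rewrite /fblocks; apply: allpairs_uniq_dep; first exact: iota_uniq.
    by move=> i _; rewrite sort_uniq; exact: fset_uniq.
  by move=> [i1 w1] [i2 w2] _ _ /= [e1 e2]; subst.
move=> [|x v]; first by rewrite !in_cons eqxx.
rewrite mem_jseq_cons in_cons.
have -> : (x :: v == [::]) = false by [].
rewrite orFb; apply/idP/flatten_mapP.
  case/and3P=> xp xs vi; exists x.-1; first by rewrite mem_iota add0n xs.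
  by apply/mapP; exists v; rewrite ?prednK // mem_sort.
case=> i; rewrite mem_iota add0n => /andP[_ hi] /mapP [w].
by rewrite mem_sort => wi [-> ->] /=; rewrite hi.
Qed.

Lemma vertex_join0 f : vertex (join f) 0 = [::].
Proof. by rewrite vertexE sort_join. Qed.

Lemma vertex_joinS f m : vertex (join f) m.+1 = nth [::] (fblocks f) m.
Proof. by rewrite vertexE sort_join. Qed.

Lemma size_fblocks f : size (fblocks f) = fsize f.
Proof.
rewrite size_flatten sumnE /shape -map_comp big_map /fsize (big_nth fset0).
rewrite /index_iota subn0; apply: eq_bigr => i _ /=.
by rewrite size_map size_sortw.
Qed.

Lemma nth_fblocks_split f1 t f2 m :
  (fsize f1 <= m < fsize f1 + tree_size t)%N ->
  nth [::] (fblocks (f1 ++ t :: f2)) m = (size f1).+1 :: vertex t (m - fsize f1).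
Proof.
case/andP=> le lt.
rewrite /fblocks size_cat /= iotaD map_cat flatten_cat add0n.
have -> : [seq [seq i.+1 :: v | v <- sortw (nth fset0 (f1 ++ t :: f2) i)] | i <- iota 0 (size f1)]
  = [seq [seq i.+1 :: v | v <- sortw (nth fset0 f1 i)] | i <- iota 0 (size f1)].
  apply/eq_in_map => i; rewrite mem_iota add0n => /andP[_ hi].
  by rewrite nth_cat hi.
rewrite nth_cat -/(fblocks f1) size_fblocks ltnNge le /=.
rewrite nth_cat size_map size_sortw nth_cat ltnn subnn /=.
rewrite ltn_subLR // lt (nth_map [::]) ?size_sortw ?ltn_subLR //.
Qed.

Lemma fsum_dep (R : realType) (I J : choiceType) (A : set I) (B : I -> set J)
    (U : set J) (F : I -> J -> R) :
  finite_set A -> finite_set U -> (forall i, A i -> B i `<=` U) ->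
  \sum_(i \in A) \sum_(j \in B i) F i j =
  \sum_(p \in [set p | A p.1 /\ B p.1 p.2]) F p.1 p.2.
Proof.
move=> FA FU BU.
pose G i j := if `[< B i j >] then F i j else 0.
transitivity (\sum_(i \in A) \sum_(j \in U) G i j).
  apply: eq_fsbigr => i; rewrite inE => Ai.
  transitivity (\sum_(j \in B i) G i j).
    by apply: eq_fsbigr => j; rewrite inE /G => Bj; rewrite asboolT.
  apply: fsbig_widen; first exact: BU.
  by move=> j [_ nB]; rewrite /preimage /= /G asboolF.
rewrite pair_fsbig //.
transitivity (\sum_(p \in [set p | A p.1 /\ B p.1 p.2]) G p.1 p.2); last first.
  by apply: eq_fsbigr => p; rewrite inE => -[_ Bp]; rewrite /G asboolT.
apply/esym; apply: fsbig_widen.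
  by move=> p [Ap Bp]; split => //; apply: BU Ap _ Bp.
move=> [i j] [[Ai Uj] /= nS]; rewrite /preimage /= /G asboolF //.
by move=> Bj; apply: nS.
Qed.

Lemma fsum_partition (R : realType) (I : choiceType) (J : eqType) (A : set I)
    (g : I -> J) (r : seq J) (F : I -> R) :
  finite_set A -> uniq r -> (forall i, A i -> g i \notin r -> F i = 0) ->
  \sum_(i \in A) F i = \sum_(y <- r) \sum_(i \in [set i | A i /\ g i = y]) F i.
Proof.
elim: r A => [|y r IH] A FA ur H0.
  by rewrite big_nil; apply: fsbig1 => i Ai; apply: H0.
rewrite big_cons (fsbigID [set i | g i = y]) //; congr (_ + _).
case/andP: ur => yr ur.
rewrite (IH _ (finite_setIl _ FA) ur); last first.
  move=> i [Ai ngi] gr; apply: H0 => //; rewrite in_cons negb_or gr andbT.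
  by apply/eqP.
apply: eq_big_seq => z zr; apply: eq_fsbigl; apply/seteqP; split.
  by move=> i [[Ai _] gi].
move=> i [Ai gi]; split => //; split => // e.
by move: yr; rewrite -e gi zr.
Qed.

Definition pairsK (K : nat) : seq (nat * nat) := [seq (k, j) | k <- iota 1 K, j <- iota 1 k].

Lemma uniq_pairsK K : uniq (pairsK K).
Proof.
apply: allpairs_uniq_dep; first exact: iota_uniq.
  by move=> k _; exact: iota_uniq.
by move=> [k1 j1] [k2 j2] _ _ /= [-> ->].
Qed.

Lemma mem_pairsK K k j : ((k, j) \in pairsK K) = (1 <= j <= k)%N && (k <= K)%N.
Proof.
apply/allpairsPdep/idP.
  case=> k' [j' [kk jj [-> ->]]]; move: kk jj; rewrite !mem_iota.
  by case/andP=> k1 kK /andP[j1 jk]; rewrite j1 -ltnS -[k'.+1]add1n jk -ltnS -[k'.+1]add1n.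
case/andP=> /andP[j1 jk] kK; exists k, j; split => //; rewrite mem_iota.
  by rewrite (leq_trans j1 jk) add1n ltnS.
by rewrite j1 add1n ltnS.
Qed.

Lemma bigI_pairs (R : Type) (idx : R) (op : Monoid.com_law idx) K (G : nat -> nat -> R) :
  \big[op/idx]_(1 <= k < K.+1) \big[op/idx]_(1 <= j < k.+1) G k j =
  \big[op/idx]_(p <- pairsK K) G p.1 p.2.
Proof.
by rewrite /pairsK big_allpairs_dep /index_iota subn1 /=; apply: eq_bigr => k _; rewrite subn1.
Qed.

Definition dec (a : nat -> nat -> nat) (k0 j0 : nat) : nat -> nat -> nat :=
  fun k j => if (k == k0) && (j == j0) then (a k j).-1 else a k j.

Lemma sumI_dec K a k0 j0 (G : nat -> nat -> nat) :
  (k0, j0) \in pairsK K -> (0 < a k0 j0)%N ->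
  sumI K (fun k j => G k j * a k j)%N =
  (sumI K (fun k j => G k j * dec a k0 j0 k j) + G k0 j0)%N.
Proof.
move=> p0 ap; rewrite /sumI !bigI_pairs /=.
rewrite !(bigD1_seq (k0, j0)) ?uniq_pairsK //= /dec !eqxx /=.
rewrite -addnA [(_ + G k0 j0)%N]addnC addnA; congr (_ + _)%N.
  nia.
apply: eq_bigr => -[k j] /=; case: ifP => //; case/andP=> /eqP -> /eqP ->.
by rewrite eqxx.
Qed.

Lemma sumI_mul1 K b : sumI K b = sumI K (fun k j => 1 * b k j)%N.
Proof. by rewrite /sumI; apply: eq_bigr => k _; apply: eq_bigr => j _; rewrite mul1n. Qed.

Lemma sumI_dec1 K a k0 j0 : (k0, j0) \in pairsK K -> (0 < a k0 j0)%N ->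
  sumI K a = (sumI K (dec a k0 j0)).+1.
Proof.
move=> p0 ap; rewrite sumI_mul1 (sumI_dec _ p0 ap) [sumI K (dec _ _ _)]sumI_mul1.
by rewrite addn1.
Qed.

Lemma N1_dec K a k0 j0 : (k0, j0) \in pairsK K -> (0 < a k0 j0)%N ->
  N1 K a = (j0.-1 + N1 K (dec a k0 j0))%N.
Proof. by move=> p0 ap; rewrite /N1 (sumI_dec _ p0 ap) addnC subn1. Qed.

Lemma N2_dec K a k0 j0 : (k0, j0) \in pairsK K -> (0 < a k0 j0)%N ->
  N2 K a = (N2 K (dec a k0 j0) + (k0 - j0))%N.
Proof. by move=> p0 ap; rewrite /N2 (sumI_dec _ p0 ap). Qed.

Lemma Qh_pairs (R : realType) (mu : nat -> R) K h a :
  Qh mu K h a = h`!%:R / (\prod_(p <- pairsK K) ((a p.1 p.2)`!)%:R)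
                * \prod_(p <- pairsK K) mu p.1 ^+ a p.1 p.2.
Proof. by rewrite /Qh !bigI_pairs. Qed.

Lemma prod_fact_dec (R : realType) K a k0 j0 : (k0, j0) \in pairsK K -> (0 < a k0 j0)%N ->
  \prod_(p <- pairsK K) ((a p.1 p.2)`!)%:R =
  \prod_(p <- pairsK K) ((dec a k0 j0 p.1 p.2)`!)%:R * (a k0 j0)%:R :> R.
Proof.
move=> p0 ap; rewrite !(bigD1_seq (k0, j0)) ?uniq_pairsK //= /dec !eqxx /=.
set P := \prod_(i <- _ | _) (if _ then _ else _)`!%:R.
have -> : P = \prod_(i <- pairsK K | i != (k0, j0)) (a i.1 i.2)`!%:R.
  apply: eq_bigr => -[k j] /=; case: ifP => //; case/andP=> /eqP -> /eqP ->.
  by rewrite eqxx.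
rewrite -{1}(prednK ap) factS natrM (prednK ap); ring.
Qed.

Lemma prod_mu_dec (R : realType) (mu : nat -> R) K a k0 j0 :
  (k0, j0) \in pairsK K -> (0 < a k0 j0)%N ->
  \prod_(p <- pairsK K) mu p.1 ^+ a p.1 p.2 =
  \prod_(p <- pairsK K) mu p.1 ^+ dec a k0 j0 p.1 p.2 * mu k0.
Proof.
move=> p0 ap; rewrite !(bigD1_seq (k0, j0)) ?uniq_pairsK //= /dec !eqxx /=.
set P := \prod_(i <- _ | _) _ ^+ (if _ then _ else _).
have -> : P = \prod_(i <- pairsK K | i != (k0, j0)) mu i.1 ^+ a i.1 i.2.
  apply: eq_bigr => -[k j] /=; case: ifP => //; case/andP=> /eqP -> /eqP ->.
  by rewrite eqxx.
rewrite -{1}(prednK ap) exprS; ring.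
Qed.

Lemma prod_fact_neq0 (R : realType) K b :
  \prod_(p <- pairsK K) ((b p.1 p.2)`!)%:R != 0 :> R.
Proof. by rewrite prodf_seq_neq0; apply/allP => p _; rewrite /= pnatr_eq0 -lt0n fact_gt0. Qed.

Lemma Qh_rec (R : realType) (mu : nat -> R) K h a : sumI K a = h.+1 ->
  \sum_(p <- pairsK K) (if (0 < a p.1 p.2)%N then mu p.1 * Qh mu K h (dec a p.1 p.2) else 0)
  = Qh mu K h.+1 a.
Proof.
move=> sa.
pose C := h`!%:R / (\prod_(p <- pairsK K) ((a p.1 p.2)`!)%:R)
                * \prod_(p <- pairsK K) mu p.1 ^+ a p.1 p.2 : R.
transitivity (\sum_(p <- pairsK K) (a p.1 p.2)%:R * C).
  apply: eq_big_seq => -[k j] pK /=.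
  case: ifP => ap; last by move/negbT: ap; rewrite -eqn0Ngt => /eqP ->; rewrite mul0r.
  rewrite Qh_pairs /C (prod_fact_dec R pK ap) (prod_mu_dec mu pK ap).
  have := prod_fact_neq0 R K (dec a k j); have : (a k j)%:R != 0 :> R.
    by rewrite pnatr_eq0 -lt0n.
  move: (\prod_(p <- pairsK K) ((dec a k j p.1 p.2)`!)%:R) => D.
  move: (\prod_(p <- pairsK K) mu p.1 ^+ dec a k j p.1 p.2) => M.
  by move=> H1 H2; field; apply/andP.
rewrite -mulr_suml -natr_sum -bigI_pairs -/(sumI K a) sa Qh_pairs /C.
by rewrite factS natrM mulrA mulrA.
Qed.

Lemma size_join f : tree_size (join f) = (fsize f).+1.
Proof. by rewrite -size_sortw sort_join /= size_fblocks. Qed.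

Lemma PrT_join (R : realType) (mu : nat -> R) (P : ptree -> Prop) :
  PrT mu P = \sum_(f \in [set f | all_trees f /\ P (join f)]) mu (size f) * forest_weight mu f.
Proof.
rewrite /PrT (reindex_fsbig join [set f | all_trees f /\ P (join f)] [set t | is_tree t /\ P t]).
  by apply: eq_fsbigr => f; rewrite inE => -[Hf _]; exact: GW_join.
split.
- by move=> f [Hf Pf]; split => //; exact: join_tree.
- move=> f g; rewrite !inE => -[Hf _] [Hg _] e.
  by rewrite -(children_join Hf) -(children_join Hg) e.
- move=> t [Ht Pt]; exists (children t); last exact: join_children.
  by split; [exact: children_trees | rewrite join_children].
Qed.

Lemma fw_cat (R : realType) (mu : nat -> R) f g :
  forest_weight mu (f ++ g) = forest_weight mu f * forest_weight mu g.
Proof. by rewrite /forest_weight big_cat. Qed.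

Lemma fw_cons (R : realType) (mu : nat -> R) t f :
  forest_weight mu (t :: f) = GWprob mu t * forest_weight mu f.
Proof. by rewrite /forest_weight big_cons. Qed.

Lemma fw_nil (R : realType) (mu : nat -> R) : forest_weight mu [::] = 1.
Proof. by rewrite /forest_weight big_nil. Qed.

Lemma all_trees_cat f g : all_trees (f ++ g) <-> all_trees f /\ all_trees g.
Proof.
split.
  by move=> H; split => t tf; apply: H; rewrite mem_cat tf ?orbT.
by case=> Hf Hg t; rewrite mem_cat => /orP[/Hf|/Hg].
Qed.

Lemma all_trees_cons t f : all_trees (t :: f) <-> is_tree t /\ all_trees f.
Proof.
split.
  by move=> H; split; [apply: H; rewrite inE eqxx | move=> u uf; apply: H; rewrite inE uf orbT].
by case=> Ht Hf u; rewrite inE => /orP[/eqP ->|/Hf].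
Qed.

Lemma all_trees_nil : all_trees [::].
Proof. by []. Qed.

Lemma exists_split f m : (m < fsize f)%N ->
  exists f1 t f2, f = f1 ++ t :: f2 /\ (fsize f1 <= m < fsize f1 + tree_size t)%N.
Proof.
elim: f m => [|t f IH] m; first by rewrite fsize_nil.
rewrite fsize_cons => mlt.
case: (ltnP m (tree_size t)) => mt.
  by exists [::], t, f; rewrite fsize_nil.
have /IH [f1 [u [f2 [-> H]]]] : (m - tree_size t < fsize f)%N by lia.
exists (t :: f1), u, f2; split => //; rewrite fsize_cons; lia.
Qed.

Lemma split_inj f1 t f2 g1 u g2 m :
  (fsize f1 <= m < fsize f1 + tree_size t)%N ->
  (fsize g1 <= m < fsize g1 + tree_size u)%N ->
  f1 ++ t :: f2 = g1 ++ u :: g2 -> [/\ f1 = g1, t = u & f2 = g2].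
Proof.
elim: f1 g1 m => [|x f1 IH] [|y g1] m /=.
- by move=> _ _ [-> ->].
- move=> H1 H2 [e _]; move: H1 H2; rewrite e !fsize_cons fsize_nil; lia.
- move=> H1 H2 [e _]; move: H1 H2; rewrite e !fsize_cons fsize_nil; lia.
- rewrite !fsize_cons => H1 H2 [e E]; subst y.
  have [] := IH g1 (m - tree_size x)%N ltac:(lia) ltac:(lia) E.
  by move=> -> -> ->.
Qed.

Definition spl (p : (seq ptree * seq ptree) * ptree) : seq ptree := p.1.1 ++ p.2 :: p.1.2.

Definition trip (m0 : nat) (p : (seq ptree * seq ptree) * ptree) : Prop :=
  [/\ all_trees p.1.1, all_trees p.1.2, is_tree p.2 &
      (fsize p.1.1 <= m0 < fsize p.1.1 + tree_size p.2)%N].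

Lemma forest_split_sum (R : realType) (F : seq ptree -> R) (Q : seq ptree -> Prop) m0 :
  (forall f, all_trees f -> Q f -> (m0 < fsize f)%N) ->
  \sum_(f \in [set f | all_trees f /\ Q f]) F f =
  \sum_(p \in [set p | trip m0 p /\ Q (spl p)]) F (spl p).
Proof.
move=> HQ; apply: reindex_fsbig; split.
- move=> [[f1 f2] t] [[H1 H2 Ht _] Qp]; split => //.
  by rewrite /spl /=; apply/all_trees_cat; split => //; apply/all_trees_cons.
- move=> [[f1 f2] t] [[g1 g2] u]; rewrite !inE => -[[_ _ _ B1] _] [[_ _ _ B2] _].
  move: B1 B2 => /= B1 B2.
  by rewrite /spl /= => /(split_inj B1 B2) [-> -> ->].
- move=> f [Hf Qf]; have [f1 [t [f2 [ef B]]]] := exists_split (HQ f Hf Qf).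
  exists ((f1, f2), t); last by rewrite /spl /= ef.
  move: Hf; rewrite ef => /all_trees_cat [H1 /all_trees_cons [Ht H2]].
  by split; [split | rewrite /spl /= -ef].
Qed.

Definition Lin (K : nat) (t : ptree) (u : word) (a : nat -> nat -> nat) : Prop :=
  forall k j, (1 <= j <= k)%N -> (k <= K)%N -> lineage t u k j = a k j.

Definition TS (R : realType) (mu : nat -> R) (K N m : nat) (a : nat -> nat -> nat) : R :=
  PrT mu (fun t => tree_size t = N /\ Lin K t (vertex t m) a).

Lemma Lin_spl K f1 t f2 v a : all_trees f1 -> is_tree t -> all_trees f2 ->
  Lin K (join (f1 ++ t :: f2)) ((size f1).+1 :: v) a <->
  (forall k j, (1 <= j <= k)%N -> (k <= K)%N ->
     (lineage t v k j + ((size f1 + (size f2).+1 == k) && ((size f1).+1 == j)))%N = a k j).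
Proof.
move=> H1 Ht H2.
have Hf : all_trees (f1 ++ t :: f2) by apply/all_trees_cat; split => //; apply/all_trees_cons.
have E k j : lineage (join (f1 ++ t :: f2)) ((size f1).+1 :: v) k j =
    (lineage t v k j + ((size f1 + (size f2).+1 == k) && ((size f1).+1 == j)))%N.
  rewrite lineage_join //= ?size_cat /= ?nth_cat ?ltnn ?subnn //.
  by rewrite -[X in (X < _)%N]addn0 ltn_add2l.
by split => H k j kj kK; rewrite -H // E.
Qed.

Lemma Lin_dec K t v a k0 j0 : (k0, j0) \in pairsK K ->
  (forall k j, (1 <= j <= k)%N -> (k <= K)%N ->
     (lineage t v k j + ((k0 == k) && (j0 == j)))%N = a k j) <->
  (0 < a k0 j0)%N /\ Lin K t v (dec a k0 j0).
Proof.
rewrite mem_pairsK => /andP[kj kK]; split.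
  move=> H; split; first by rewrite -H // !eqxx addn1.
  move=> k j kj' kK'; rewrite /dec; have := H k j kj' kK'.
  case: (boolP ((k == k0) && (j == j0))) => [/andP[/eqP -> /eqP ->]|ne].
    by rewrite !eqxx addn1 => <-.
  move=> <-; rewrite (_ : (k0 == k) && (j0 == j) = false) ?addn0 //.
  by apply/negbTE; apply: contra ne; case/andP => /eqP -> /eqP ->; rewrite !eqxx.
case=> ap H k j kj' kK'; have := H k j kj' kK'; rewrite /dec.
case: (boolP ((k == k0) && (j == j0))) => [/andP[/eqP -> /eqP ->]|ne].
  by rewrite !eqxx addn1 => ->; rewrite prednK.
move=> ->; rewrite (_ : (k0 == k) && (j0 == j) = false) ?addn0 //.
by apply/negbTE; apply: contra ne; case/andP => /eqP -> /eqP ->; rewrite !eqxx.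
Qed.

Definition Aset (K N m0 k j : nat) : set (seq ptree * seq ptree) :=
  [set q | [/\ is_forest j.-1 q.1, is_forest (k - j) q.2, (fsize q.1 <= m0)%N &
              (m0 + fsize q.2 < N.-1)%N]].

Lemma finite_Aset K N m0 k j : finite_set (Aset K N m0 k j).
Proof.
apply: (@sub_finite_set _ _ ([set f | all_trees f /\ (fsize f <= N)%N] `*`
                             [set f | all_trees f /\ (fsize f <= N)%N])).
  move=> [f1 f2] [[_ H1] [_ H2] b1 b2]; move: b1 b2 => /= b1 b2.
  by split; split => //=; lia.
by apply: finite_setX; exact: finite_forests.
Qed.

Lemma decomp (R : realType) (mu : nat -> R) K N m0 a :
  (forall k, (K < k)%N -> mu k = 0) -> (m0.+1 < N)%N ->
  TS mu K N m0.+1 a = \sum_(p <- pairsK K) (if (0 < a p.1 p.2)%N then mu p.1 *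
     \sum_(q \in Aset K N m0 p.1 p.2) (forest_weight mu q.1 * forest_weight mu q.2 *
        TS mu K (N.-1 - fsize q.1 - fsize q.2) (m0 - fsize q.1) (dec a p.1 p.2)) else 0).
Proof.
move=> mu0 mN.
rewrite /TS PrT_join.
pose Q f := (fsize f).+1 = N /\ Lin K (join f) (nth [::] (fblocks f) m0) a.
transitivity (\sum_(f \in [set f | all_trees f /\ Q f]) mu (size f) * forest_weight mu f).
  apply: eq_fsbigl; apply/seteqP; split => f [Hf [H1 H2]]; split => //; split.
  - by rewrite -size_join.
  - by rewrite -vertex_joinS.
  - by rewrite size_join.
  - by rewrite vertex_joinS.
rewrite (@forest_split_sum _ _ Q m0); last by move=> f _ [e _]; lia.
set S := [set p | trip m0 p /\ Q (spl p)].
have FS : finite_set S.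
  apply: (@sub_finite_set _ _ (([set f | all_trees f /\ (fsize f <= N)%N] `*`
      [set f | all_trees f /\ (fsize f <= N)%N]) `*` [set t | is_tree t /\ (tree_size t <= N)%N])).
    move=> [[f1 f2] t] [[H1 H2 Ht B] [e _]]; move: e; rewrite /spl /= fsize_cat fsize_cons => e.
    by split; [split|] => /=; split => //; lia.
  by apply: finite_setX; [apply: finite_setX; exact: finite_forests | exact: finite_trees].
rewrite (@fsum_partition _ _ _ S (fun p => (size (spl p), (size p.1.1).+1)) (pairsK K) _ FS (uniq_pairsK K)); last first.
  move=> [[f1 f2] t] _ /=; rewrite mem_pairsK /spl size_cat /=.
  have -> : (size f1 < size f1 + (size f2).+1)%N by lia.
  by rewrite /= -ltnNge => /mu0 ->; rewrite mul0r.
apply: eq_big_seq => -[k j]; rewrite mem_pairsK => /andP[kj kK] /=.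
have pK : (k, j) \in pairsK K by rewrite mem_pairsK kj kK.
case: ifP => ap; last first.
  apply: fsbig1 => -[[f1 f2] t] [[[H1 H2 Ht B] [e L]] [ek ej]].
  move: H1 H2 Ht B e ek L; rewrite /spl /= => H1 H2 Ht B e ek L.
  move: L; rewrite /spl /= nth_fblocks_split // => /(@Lin_spl K f1 t f2 _ a H1 Ht H2) L.
  have := L k j kj kK; rewrite -ej -ek size_cat /= !eqxx addn1 => aE.
  by move: ap; rewrite -ej -ek size_cat /= -aE.
pose B (q : seq ptree * seq ptree) : set ptree := [set t | is_tree t /\
   (tree_size t = (N.-1 - fsize q.1 - fsize q.2)%N /\ Lin K t (vertex t (m0 - fsize q.1)) (dec a k j))].
have SE : [set i | S i /\ (size (spl i), (size i.1.1).+1) = (k, j)] =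
          [set p | Aset K N m0 k j p.1 /\ B p.1 p.2].
  apply/seteqP; split => -[[f1 f2] t].
  - move=> [[[H1 H2 Ht Bd] [e L]] [ek ej]].
    move: H1 H2 Ht Bd e ek L; rewrite /spl /= => H1 H2 Ht Bd e ek L.
    move: L; rewrite nth_fblocks_split // => /(@Lin_spl K f1 t f2 _ a H1 Ht H2) L.
    have ek' : (size f1 + (size f2).+1)%N = k by rewrite -ek size_cat.
    rewrite ek' ej in L; move/(@Lin_dec K t _ a k j pK): L => [_ L].
    move: e; rewrite fsize_cat fsize_cons => e.
    split; first by split => /=; [split => //; lia | split => //; lia | lia | lia].
    by split => //; split => //=; lia.
  - move=> [[[s1 H1] [s2 H2] b1 b2] [Ht [ts L]]].
    move: s1 H1 s2 H2 b1 b2 Ht ts L => /= s1 H1 s2 H2 b1 b2 Ht ts L.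
    have kk : (size f1 + (size f2).+1)%N = k by lia.
    have jj : (size f1).+1 = j by lia.
    split; last by rewrite /spl size_cat /= kk jj.
    move: b2 ts; rewrite -subn1 => b2 ts.
    split; first by split => //=; lia.
    split; first by rewrite /spl /= fsize_cat fsize_cons; lia.
    rewrite /spl /= nth_fblocks_split; last by lia.
    apply/(@Lin_spl K f1 t f2 _ a H1 Ht H2); rewrite kk jj.
    by apply/(@Lin_dec K t _ a k j pK); split; rewrite ?ap.
rewrite SE.
transitivity (\sum_(p \in [set p | Aset K N m0 k j p.1 /\ B p.1 p.2])
     (mu k * (forest_weight mu p.1.1 * forest_weight mu p.1.2)) * GWprob mu p.2).
  apply: eq_fsbigr => -[[f1 f2] t]; rewrite inE => -[[[s1 _] [s2 _] _ _] _].
  move: s1 s2 => /= s1 s2.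
  rewrite /spl size_cat /= fw_cat fw_cons.
  have -> : (size f1 + (size f2).+1)%N = k by rewrite s1 s2; lia.
  by ring.
rewrite -(@fsum_dep R _ _ (Aset K N m0 k j) B [set t | is_tree t /\ (tree_size t <= N)%N]
   (fun q t => mu k * (forest_weight mu q.1 * forest_weight mu q.2) * GWprob mu t));
   last 3 first.
- exact: finite_Aset.
- exact: finite_trees.
- move=> q [_ _ _ b] t [Ht [ts _]]; split => //; lia.
rewrite mulr_fsumr; apply: eq_fsbigr => q _.
by rewrite /TS /PrT [RHS]mulrA [RHS]mulr_fsumr.
Qed.

Lemma fsize_td n F : fsize F = (fsize (take n F) + fsize (drop n F))%N.
Proof. by rewrite -fsize_cat cat_take_drop. Qed.

Lemma all_trees_take n F : all_trees F -> all_trees (take n F).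
Proof. by move=> H t /mem_take /H. Qed.

Lemma all_trees_drop n F : all_trees F -> all_trees (drop n F).
Proof. by move=> H t /mem_drop /H. Qed.

Lemma conv (R : realType) (mu : nat -> R) K N m0 hh k j n1 n2 :
  (1 <= j <= k)%N -> (m0.+1 < N)%N -> (1 <= n2)%N ->
  \sum_(q \in Aset K N m0 k j) (forest_weight mu q.1 * forest_weight mu q.2 *
      PrFF mu n1 n2 ((m0 - fsize q.1)%N%:Z - hh%:Z)
        ((N.-1 - fsize q.1 - fsize q.2)%N%:Z - (m0 - fsize q.1)%N%:Z))
  = PrFF mu (j.-1 + n1) (n2 + (k - j)) (m0.+1%:Z - hh.+1%:Z) (N%:Z - m0.+1%:Z).
Proof.
move=> kj mN n2p.
pose C (q : seq ptree * seq ptree) := [set p : seq ptree * seq ptree |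
  [/\ is_forest n1 p.1, is_forest n2 p.2,
      (fsize p.1)%:Z = (m0 - fsize q.1)%N%:Z - hh%:Z &
      (fsize p.2)%:Z = (N.-1 - fsize q.1 - fsize q.2)%N%:Z - (m0 - fsize q.1)%N%:Z]].
transitivity (\sum_(q \in Aset K N m0 k j) \sum_(p \in C q)
   (forest_weight mu q.1 * forest_weight mu q.2 * (forest_weight mu p.1 * forest_weight mu p.2))).
  by apply: eq_fsbigr => q _; rewrite /PrFF mulr_fsumr.
rewrite (@fsum_dep R _ _ (Aset K N m0 k j) C
   ([set f | all_trees f /\ (fsize f <= N)%N] `*` [set f | all_trees f /\ (fsize f <= N)%N])
   (fun q p => forest_weight mu q.1 * forest_weight mu q.2 * (forest_weight mu p.1 * forest_weight mu p.2)));
   last 3 first.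
- exact: finite_Aset.
- by apply: finite_setX; exact: finite_forests.
- move=> q [_ _ b1 b2] p [[_ H1] [_ H2] e1 e2]; move: b2; rewrite -subn1 => b2.
  split; split => //=; lia.
rewrite /PrFF (reindex_fsbig (fun r : (seq ptree * seq ptree) * (seq ptree * seq ptree) =>
    (r.1.1 ++ r.2.1, r.2.2 ++ r.1.2)) [set r | Aset K N m0 k j r.1 /\ C r.1 r.2]).
  by apply: eq_fsbigr => -[[f1 f2] [F1 F2]] _ /=; rewrite !fw_cat; ring.
split.
- move=> [[f1 f2] [F1 F2]] [[[s1 H1] [s2 H2] b1 b2] [[s3 H3] [s4 H4] e1 e2]].
  move: s1 H1 s2 H2 b1 b2 s3 H3 s4 H4 e1 e2 => /= s1 H1 s2 H2 b1 b2 s3 H3 s4 H4 e1 e2.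
  move: b2 e2; rewrite -subn1 => b2 e2.
  split => /=.
  + by split; [rewrite size_cat s1 s3 | apply/all_trees_cat].
  + by split; [rewrite size_cat s2 s4 | apply/all_trees_cat].
  + rewrite fsize_cat; lia.
  + rewrite fsize_cat; lia.
- move=> [[f1 f2] [F1 F2]] [[g1 g2] [G1 G2]]; rewrite !inE.
  move=> [[[s1 _] [s2 _] _ _] [[s3 _] [s4 _] _ _]] [[[t1 _] [t2 _] _ _] [[t3 _] [t4 _] _ _]].
  move: s1 s2 s3 s4 t1 t2 t3 t4 => /= s1 s2 s3 s4 t1 t2 t3 t4 [e1 e2].
  have Ef1 : f1 = g1 by move: (congr1 (take j.-1) e1); rewrite !take_size_cat.
  have EF1 : F1 = G1 by move: (congr1 (drop j.-1) e1); rewrite !drop_size_cat.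
  have EF2 : F2 = G2 by move: (congr1 (take n2) e2); rewrite !take_size_cat.
  have Ef2 : f2 = g2 by move: (congr1 (drop n2) e2); rewrite !drop_size_cat.
  by rewrite Ef1 EF1 EF2 Ef2.
- move=> [F F'] [[sF HF] [sF' HF'] eF eF'].
  move: sF HF sF' HF' eF eF' => /= sF HF sF' HF' eF eF'.
  exists ((take j.-1 F, drop n2 F'), (drop j.-1 F, take n2 F')); last by rewrite /= !cat_take_drop.
  have e1 := fsize_td j.-1 F; have e2 := fsize_td n2 F'.
  have st : size (take n2 F') = n2 by rewrite size_takel // sF' leq_addr.
  have lt := size_le_fsize (@all_trees_take n2 F' HF').
  rewrite st in lt.
  split; split => /=.
  + by split; [rewrite size_takel // sF leq_addr | exact: all_trees_take].
  + by split; [rewrite size_drop sF' addnC addnK | exact: all_trees_drop].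
  + set a1 := fsize (take _ F) in e1 *; lia.
  + set a4 := fsize (drop _ F') in e2 *; rewrite -subn1; lia.
  + by split; [rewrite size_drop sF addnC addnK | exact: all_trees_drop].
  + by split; [exact: st | exact: all_trees_take].
  + set a1 := fsize (take _ F) in e1 *; set a2 := fsize (drop _ F) in e1 *; lia.
  + set a1 := fsize (take _ F) in e1 *; set a3 := fsize (take _ F') in e2 lt *;
    set a4 := fsize (drop _ F') in e2 *; rewrite -subn1; lia.
Qed.

Lemma vertex0 t : is_tree t -> vertex t 0 = [::].
Proof. by move=> Ht; rewrite -(join_children Ht) vertex_join0. Qed.

Lemma lineage_nil t k j : lineage t [::] k j = 0%N.
Proof. by []. Qed.

Lemma sumI_eq0 K a : sumI K a = 0%N -> forall k j, (k, j) \in pairsK K -> a k j = 0%N.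
Proof.
rewrite /sumI bigI_pairs => /eqP; rewrite sum_nat_seq_eq0 => /allP H k j kj.
by apply/eqP; apply: (H (k, j)).
Qed.

Lemma sumI_0 K (G : nat -> nat -> nat) a : (forall k j, (k, j) \in pairsK K -> a k j = 0%N) ->
  sumI K (fun k j => G k j * a k j)%N = 0%N.
Proof.
move=> H; rewrite /sumI bigI_pairs big1_seq // => -[k j] /andP[_ kj].
by rewrite H ?muln0.
Qed.

Lemma PrFF_neg (R : realType) (mu : nat -> R) k k' x y : x < 0 -> PrFF mu k k' x y = 0.
Proof.
move=> xn; apply: fsbig1 => p [_ _ e _]; move: xn; rewrite -e; lia.
Qed.

Lemma PrFF_0 (R : realType) (mu : nat -> R) k' x y : x != 0 -> PrFF mu 0 k' x y = 0.
Proof.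
move=> xn; apply: fsbig1 => -[f g] [[sf _] _ e _]; move: sf xn; rewrite -e /= => sf.
by move/size0nil: sf => ->; rewrite fsize_nil.
Qed.

Lemma Qh0 (R : realType) (mu : nat -> R) K a :
  (forall k j, (k, j) \in pairsK K -> a k j = 0%N) -> Qh mu K 0 a = 1.
Proof.
move=> H; rewrite Qh_pairs !big1_seq ?divr1 ?mulr1 //.
  by move=> -[k j] /andP[_ kj]; rewrite H ?expr0.
by move=> -[k j] /andP[_ kj]; rewrite H.
Qed.

Lemma main_num (R : realType) (mu : nat -> R) K :
  (forall k, (K < k)%N -> mu k = 0) ->
  forall h N m a, sumI K a = h -> (m < N)%N ->
  TS mu K N m a = Qh mu K h a * PrFF mu (N1 K a) (1 + N2 K a) (m%:Z - h%:Z) (N%:Z - m%:Z).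
Proof.
move=> mu0 h; elim: h => [|hh IH] N m a sa mN.
- have a0 := sumI_eq0 sa.
  rewrite Qh0 // mul1r /N1 /N2 !sumI_0 // addn0.
  case: m mN => [|m0] mN.
  + rewrite /TS /PrT /PrFF.
    transitivity (\sum_(t \in [set t | is_tree t /\ tree_size t = N]) GWprob mu t).
      apply: eq_fsbigl; apply/seteqP; split => t [Ht H]; first by case: H.
      split => //; split => // k j kj kK.
      by rewrite vertex0 // lineage_nil a0 // mem_pairsK kj kK.
    apply/esym; rewrite (reindex_fsbig (fun t : ptree => ([::] : seq ptree, [:: t]))
                   [set t | is_tree t /\ tree_size t = N]).
      by apply: eq_fsbigr => t _; rewrite /= fw_nil fw_cons fw_nil mul1r mulr1.
    split.
    * move=> t [Ht ts] /=; split.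
      - by [].
      - by split => //; apply/all_trees_cons.
      - by rewrite fsize_nil.
      - by rewrite fsize_cons fsize_nil ts addn0 subr0.
    * by move=> t u _ _ [].
    * move=> [f g] [[sf _] [sg Hg] ef eg]; move: sf sg Hg ef eg => /= sf sg Hg ef eg.
      move/size0nil: sf => ->; case: g sg Hg eg => [|t [|u g]] //= _ Hg eg.
      exists t => //.
      split; first by apply: Hg; rewrite inE eqxx.
      by move: eg; rewrite fsize_cons fsize_nil addn0; lia.
  + rewrite PrFF_0 ?mulr0; last by lia.
    rewrite decomp //; apply: big1_seq => -[k j] /andP[_ pK] /=.
    by rewrite a0.
- case: m mN => [|m0] mN.
  + rewrite PrFF_neg ?mulr0; last by lia.
    apply: fsbig1 => t [Ht [ts L]]; exfalso.
    have H : forall k j, (k, j) \in pairsK K -> a k j = 0%N.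
      move=> k j; rewrite mem_pairsK => /andP[kj kK].
      by rewrite -L // vertex0.
    by move: sa; rewrite sumI_mul1 (sumI_0 _ H).
  + rewrite decomp //.
    transitivity ((\sum_(p <- pairsK K) (if (0 < a p.1 p.2)%N then mu p.1 * Qh mu K hh (dec a p.1 p.2) else 0))
      * PrFF mu (N1 K a) (1 + N2 K a) (m0.+1%:Z - hh.+1%:Z) (N%:Z - m0.+1%:Z)); last by rewrite Qh_rec.
    rewrite big_distrl /=; apply: eq_big_seq => -[k j] pK /=.
    case: ifP => ap; last by rewrite mul0r.
    have kj : (1 <= j <= k)%N by move: pK; rewrite mem_pairsK => /andP[].
    have sd : sumI K (dec a k j) = hh by move: sa; rewrite (sumI_dec1 pK ap) => -[].
    transitivity (mu k * (Qh mu K hh (dec a k j) * \sum_(q \in Aset K N m0 k j)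
       (forest_weight mu q.1 * forest_weight mu q.2 *
        PrFF mu (N1 K (dec a k j)) (1 + N2 K (dec a k j)) ((m0 - fsize q.1)%N%:Z - hh%:Z)
          ((N.-1 - fsize q.1 - fsize q.2)%N%:Z - (m0 - fsize q.1)%N%:Z)))).
      congr (_ * _); rewrite mulr_fsumr; apply: eq_fsbigr => q; rewrite inE => -[_ _ b1 b2].
      rewrite IH //; first by ring.
      move: b1 b2; set x1 := fsize q.1; set x2 := fsize q.2; rewrite -subn1; lia.
    rewrite conv //.
    by rewrite -(N1_dec pK ap) (N2_dec pK ap) addnA mulrA.
Qed.

Local Close Scope classical_set_scope.

Theorem proposition5 (R : realType) (mu : nat -> R) (K : nat)
  (* (H1) *)
  (mu_ge0 : forall k, 0 <= mu k)
  (K_gt0 : (0 < K)%N)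
  (mu_supp : forall k, (K < k)%N -> mu k = 0)
  (mu_sum : \sum_(0 <= k < K.+1) mu k = 1)
  (mu_crit : \sum_(0 <= k < K.+1) k%:R * mu k = 1)
  (mu_nondeg : mu 0%N + mu 1%N != 1)
  (n : nat) (hn : 0 < PrT mu (fun t => tree_size t = n.+1))
  (h : nat) (a : nat -> nat -> nat) (ha : sumI K a = h)
  (m : nat) (hm : (m <= n)%N) :
  PrT mu (fun t => tree_size t = n.+1 /\
            forall k j, (1 <= j <= k)%N -> (k <= K)%N ->
              lineage t (vertex t m) k j = a k j)
    / PrT mu (fun t => tree_size t = n.+1)
  = Qh mu K h a *
    PrFF mu (N1 K a) (1 + N2 K a) (m%:Z - h%:Z) (n.+1%:Z - m%:Z)
    / PrT mu (fun t => tree_size t = n.+1).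
Proof.
have E : PrT mu (fun t => tree_size t = n.+1 /\
            forall k j, (1 <= j <= k)%N -> (k <= K)%N ->
              lineage t (vertex t m) k j = a k j) = TS mu K n.+1 m a by [].
by rewrite E (@main_num R mu K mu_supp h n.+1 m a ha).
Qed.
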